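(* Let $F \in \mathcal{F}_{\text{PŁ}}(L,\mu,\tau,\nu)$, and suppose a herding subroutine with herding bound $H$ is available, with $n \ge H$. Run offline GraB for $K$ epochs from $\mathbf{x}_0^1$ with constant step size $$\eta = \frac{2}{\mu nK}W_0\left(\frac{\left(F(\mathbf{x}_0^1) - F^* + \nu^2/L\right)\mu^3n^2K^2}{192H^2L^2\nu^2}\right),$$ where $W_0$ is the principal branch of the Lambert W function. Then, for $K \gtrsim \kappa(\tau+1)$ with $\kappa := L/\mu$, $$F(\mathbf{x}_n^K) - F^* = \tilde{\mathcal{O}}\left(\frac{H^2L^2\nu^2}{\mu^3n^2K^2}\right).$$
   Context: Finite-sum problem: $F(\mathbf{x}) = \frac1n\sum_{i=1}^n f_i(\mathbf{x})$ on $\mathbb{R}^d$, $F^* = \inf F > -\infty$. $\mu$-PŁ condition: $\frac12\|\nabla F(\mathbf{x})\|^2 \ge \mu(F(\mathbf{x}) - F^* )$ for all $\mathbf{x}$. $\mathcal{F}_{\text{PŁ}}(L,\mu,\tau,\nu)$: all such $F$ with each $f_i$ $L$-smooth (not necessarily convex), $F$ satisfying the $\mu$-PŁ condition, and $\|\nabla f_i(\mathbf{x}) - \nabla F(\mathbf{x})\| \le \tau\|\nabla F(\mathbf{x})\| + \nu$ for all $i,\mathbf{x}$. Herding assumption with bound $H$: there is an algorithm that, given $\mathbf{z}_1,\dots,\mathbf{z}_n \in \mathbb{R}^d$ with $\|\mathbf{z}_i\| \le 1$ and $\sum_i \mathbf{z}_i = 0$, outputs a permutation $\sigma$ of $[n]$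 with $\max_{1\le k\le n}\|\sum_{i=1}^k \mathbf{z}_{\sigma(i)}\| \le H$ (applied to vectors after rescaling them to norm at most $1$, which does not change the output permutation's role). Offline GraB: given an initial order $\sigma_1$, for each epoch $k = 1,\dots,K$: for $i=1,\dots,n$ compute $\mathbf{z}_i = \nabla f_{\sigma_k(i)}(\mathbf{x}_{i-1}^k)$ and set $\mathbf{x}_i^k = \mathbf{x}_{i-1}^k - \eta\mathbf{z}_i$; then set $\mathbf{x}_0^{k+1} = \mathbf{x}_n^k$, $\mathbf{z} = \frac1n\sum_i\mathbf{z}_i$, and let $\sigma_{k+1}$ be the output of the herding algorithm on $\{\mathbf{z}_i - \mathbf{z}\}_{i=1}^n$. Notation: $K \gtrsim x$ means $K \ge Cx\log(\mathrm{poly}(n,K,\mu,L,\dots))$ for a numerical constant $C$; $\tilde{\mathcal{O}}(\cdot)$ hides universal constants and polylogarithmic factors. *)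

(* Defs.v *)
From HB Require Import structures.
From mathcomp Require Import all_boot all_order all_algebra all_fingroup.
From mathcomp Require Import all_classical all_reals all_analysis.
Set Implicit Arguments. Unset Strict Implicit. Unset Printing Implicit Defensive.
Import Order.TTheory GRing.Theory Num.Theory.
Import numFieldNormedType.Exports.
Local Open Scope classical_set_scope.
Local Open Scope ring_scope.

Section Defs.
Variables (R : realType) (d : nat).
Notation vec := 'rV[R]_d.

Definition dotv (u v : vec) : R := \sum_(j < d) u 0 j * v 0 j.
Definition norm2 (v : vec) : R := Num.sqrt (dotv v v).

Definition LambertW0 (x : R) : R :=
  xget 0 [set w : R | -1 <= w /\ w * expR w = x].

Definition is_gradient (f : vec -> R) (g : vec -> vec) : Prop :=
  forall x : vec, differentiable f x /\ forall h : vec, 'd f x h = dotv (g x) h.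

Variable n : nat.

Definition herding_bound (herd : ('I_n -> vec) -> 'S_n) (H : R) : Prop :=
  forall z : 'I_n -> vec,
    (forall i, norm2 (z i) <= 1) -> \sum_(i < n) z i = 0 ->
    forall k : nat, (1 <= k <= n)%N ->
      norm2 (\sum_(i < n | (i < k)%N) z (herd z i)) <= H.

Definition rescale (z : 'I_n -> vec) : 'I_n -> vec :=
  let c := \big[Num.max/0]_(i < n) norm2 (z i) in
  fun i => if c == 0 then z i else c^-1 *: z i.

Variables (g : 'I_n -> vec -> vec) (eta : R) (herd : ('I_n -> vec) -> 'S_n).

Definition order_seq (s : 'S_n) : seq 'I_n := [seq s i | i <- enum 'I_n].

Definition pass_iter (s : 'S_n) (x0 : vec) (m : nat) : vec :=
  foldl (fun y j => y - eta *: g j y) x0 (take m (order_seq s)).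

Definition epoch_grad (s : 'S_n) (x0 : vec) (j : 'I_n) : vec :=
  g j (pass_iter s x0 (index j (order_seq s))).

Definition next_order (s : 'S_n) (x0 : vec) : 'S_n :=
  let zbar := (n%:R)^-1 *: \sum_(j < n) epoch_grad s x0 j in
  herd (rescale (fun j => epoch_grad s x0 j - zbar)).

(* GraB_state k = (sigma_{k+1}, x_0^{k+1}) ; in particular the second
   component of GraB_state K is x_n^K *)
Fixpoint GraB_state (s1 : 'S_n) (x01 : vec) (k : nat) : 'S_n * vec :=
  match k with
  | 0 => (s1, x01)
  | k'.+1 => let st := GraB_state s1 x01 k' in
             (next_order st.1 st.2, pass_iter st.1 st.2 n)
  end.

End Defs.

(* Main.v *)
Require Import Defs.
From HB Require Import structures.
From mathcomp Require Import all_boot all_order all_algebra all_fingroup.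
From mathcomp Require Import all_classical all_reals all_analysis.
From mathcomp Require Import lra ring.
Set Implicit Arguments. Unset Strict Implicit. Unset Printing Implicit Defensive.
Import Order.TTheory GRing.Theory Num.Theory.
Import numFieldNormedType.Exports.
Local Open Scope classical_set_scope.
Local Open Scope ring_scope.
Section Vec.
Variables (R : realType) (d : nat).
Implicit Types (u v w : 'rV[R]_d).

Lemma dotvC u v : dotv u v = dotv v u.
Proof. by apply: eq_bigr => j _; rewrite mulrC. Qed.

Lemma dotvDl u v w : dotv (u + v) w = dotv u w + dotv v w.
Proof. by rewrite /dotv -big_split; apply: eq_bigr => j _; rewrite !mxE mulrDl. Qed.

Lemma dotvDr u v w : dotv w (u + v) = dotv w u + dotv w v.
Proof. by rewrite dotvC dotvDl !(dotvC w). Qed.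

Lemma dotvZl a u v : dotv (a *: u) v = a * dotv u v.
Proof. by rewrite /dotv mulr_sumr; apply: eq_bigr => j _; rewrite !mxE mulrA. Qed.

Lemma dotvZr a u v : dotv v (a *: u) = a * dotv v u.
Proof. by rewrite dotvC dotvZl dotvC. Qed.

Lemma dotvNl u v : dotv (- u) v = - dotv u v.
Proof. by rewrite -scaleN1r dotvZl mulN1r. Qed.

Lemma dotvNr u v : dotv v (- u) = - dotv v u.
Proof. by rewrite dotvC dotvNl dotvC. Qed.

Lemma dotvBl u v w : dotv (u - v) w = dotv u w - dotv v w.
Proof. by rewrite dotvDl dotvNl. Qed.

Lemma dotvBr u v w : dotv w (u - v) = dotv w u - dotv w v.
Proof. by rewrite dotvDr dotvNr. Qed.

Lemma dotv0l v : dotv 0 v = 0.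
Proof. by rewrite /dotv big1 // => j _; rewrite mxE mul0r. Qed.

Lemma dotv_suml (I : Type) (r : seq I) (P : pred I) (F : I -> 'rV[R]_d) v :
  dotv (\sum_(i <- r | P i) F i) v = \sum_(i <- r | P i) dotv (F i) v.
Proof.
elim/big_rec2: _ => [|i y1 y2 _ h]; first by rewrite dotv0l.
by rewrite dotvDl h.
Qed.

Lemma dotvv_ge0 v : 0 <= dotv v v.
Proof. by apply: sumr_ge0 => j _; rewrite -expr2 sqr_ge0. Qed.

Lemma dotvv_eq0 v : dotv v v = 0 -> v = 0.
Proof.
move=> /eqP; rewrite psumr_eq0 => [/allP H|j _]; last by rewrite -expr2 sqr_ge0.
apply/rowP => j; rewrite mxE; have := H j (mem_index_enum j).
by rewrite /= -expr2 sqrf_eq0 => /eqP.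
Qed.

Lemma norm2_ge0 v : 0 <= norm2 v.
Proof. exact: sqrtr_ge0. Qed.

Lemma norm2_sq v : norm2 v ^+ 2 = dotv v v.
Proof. by rewrite /norm2 sqr_sqrtr // dotvv_ge0. Qed.

Lemma norm2_eq0 v : norm2 v = 0 -> v = 0.
Proof. by move=> H; apply: dotvv_eq0; rewrite -norm2_sq H expr0n. Qed.

Lemma norm2_0 : norm2 (0 : 'rV[R]_d) = 0.
Proof. by rewrite /norm2 dotv0l sqrtr0. Qed.

Lemma norm2Z a v : norm2 (a *: v) = `|a| * norm2 v.
Proof.
by rewrite /norm2 dotvZl dotvZr mulrA -expr2 sqrtrM ?sqr_ge0 // sqrtr_sqr.
Qed.

Lemma norm2N v : norm2 (- v) = norm2 v.
Proof. by rewrite -scaleN1r norm2Z normrN1 mul1r. Qed.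

Lemma norm2B u v : norm2 (u - v) = norm2 (v - u).
Proof. by rewrite -norm2N opprB. Qed.

Lemma cauchy_schwarz u v : dotv u v <= norm2 u * norm2 v.
Proof.
set a := norm2 u; set b := norm2 v.
have H := dotvv_ge0 (b *: u - a *: v).
rewrite dotvBl !dotvBr !dotvZl !dotvZr -!norm2_sq -/a -/b (dotvC v u) in H.
have ha : 0 <= a := norm2_ge0 u. have hb : 0 <= b := norm2_ge0 v.
have [ab0|abp] := eqVneq (a * b) 0.
  move/eqP: ab0; rewrite mulf_eq0 => /orP[/eqP|/eqP] h0.
    by rewrite h0 mul0r (norm2_eq0 h0) dotv0l.
  by rewrite h0 mulr0 dotvC (norm2_eq0 h0) dotv0l.
have abg : 0 < a * b by rewrite lt_neqAle eq_sym abp mulr_ge0.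
have : a * b * (dotv u v) <= a * b * (a * b) by nra.
by rewrite ler_pM2l.
Qed.

Lemma cauchy_schwarz_abs u v : `|dotv u v| <= norm2 u * norm2 v.
Proof.
rewrite ler_norml cauchy_schwarz andbT.
have := cauchy_schwarz (- u) v; rewrite dotvNl norm2N; lra.
Qed.

Lemma norm2D u v : norm2 (u + v) <= norm2 u + norm2 v.
Proof.
have h1 := norm2_ge0 u; have h2 := norm2_ge0 v; have h3 := norm2_ge0 (u + v).
rewrite -(ler_pXn2r (n:=2)) ?nnegrE ?addr_ge0 //.
rewrite norm2_sq dotvDl !dotvDr -!norm2_sq (dotvC v u).
have := cauchy_schwarz u v; nra.
Qed.

Lemma norm2_sum (I : Type) (r : seq I) (P : pred I) (F : I -> 'rV[R]_d) :
  norm2 (\sum_(i <- r | P i) F i) <= \sum_(i <- r | P i) norm2 (F i).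
Proof.
elim/big_rec2: _ => [|i y1 y2 _ h]; first by rewrite norm2_0.
by apply: le_trans (norm2D _ _) _; rewrite lerD2l.
Qed.

End Vec.
Lemma descent1 (R : realType) d (f : 'rV[R]_d -> R) g (L : R) :
  0 <= L -> is_gradient f g ->
  (forall x y, norm2 (g x - g y) <= L * norm2 (x - y)) ->
  forall x y, f y <= f x + dotv (g x) (y - x) + L * norm2 (y - x) ^+ 2.
Proof.
move=> L0 Hg HL x y; set h := y - x.
pose phi := fun t : R => f (x + t *: h).
have key : forall t, (fun s : R => s^-1 *: ((phi \o shift t) (s *: 1) - phi t)) =
    (fun s => s^-1 *: ((f \o shift (x + t *: h)) (s *: h) - f (x + t *: h))).
  move=> t; apply/funext => s /=; rewrite /phi; congr (_ *: (f _ - _)).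
  by rewrite [s *: 1]mulr1 scalerDl addrCA.
have Dphi : forall t : R, is_derive t (1:R) phi (dotv (g (x + t *: h)) h).
  move=> t; have [dif dd] := Hg (x + t *: h).
  split; first by have := diff_derivable (v:=h) dif; rewrite /derivable key.
  by rewrite /derive key -/(derive f (x + t *: h) h) deriveE.
have cont : {within `[0, 1], continuous phi}.
  by apply: derivable_within_continuous => t _; case: (Dphi t).
have [c cin Hc] := MVT ltr01 (fun t _ => Dphi t) cont.
move: cin; rewrite in_itv /= => /andP[c0 c1].
have xh : x + h = y by rewrite /h addrCA subrr addr0.
move: Hc; rewrite /phi scale0r addr0 scale1r xh subr0 mulr1 => Hc.
have E : dotv (g (x + c *: h)) h = dotv (g x) h + dotv (g (x + c *: h) - g x) h.
  by rewrite dotvBl addrCA subrr addr0.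
have B1 := cauchy_schwarz (g (x + c *: h) - g x) h.
have B2 := HL (x + c *: h) x.
rewrite addrAC subrr add0r norm2Z in B2.
have hc : `|c| <= 1 by rewrite ger0_norm ?ltW // ltW.
have n0 := norm2_ge0 h.
have hcn : 0 <= `|c| := normr_ge0 c.
have B3 : norm2 (g (x + c *: h) - g x) * norm2 h <= L * norm2 h ^+ 2.
  apply: le_trans (ler_wpM2r n0 B2) _.
  have q0 : 0 <= L * norm2 h * norm2 h by rewrite mulr_ge0 // mulr_ge0.
  rewrite expr2; nra.
rewrite -[f y](subrK (f x)) Hc E; lra.
Qed.
Lemma lambert_spec (R : realType) (a : R) :
  0 < a -> 0 < LambertW0 a /\ LambertW0 a * expR (LambertW0 a) = a.
Proof.
move=> a0.
have ex : exists w : R, -1 <= w /\ w * expR w = a.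
  have cf : {within `[0, a], continuous (fun w : R => w * expR w)}.
    apply: continuous_subspaceT => x.
    apply: (@continuousM _ _ (fun w : R => w) (@expR R)); first exact: cvg_id.
    exact: continuous_expR.
  have ea : 1 <= expR a by rewrite -expR0 ler_expR ltW.
  have v1 : Num.min (0 * expR 0) (a * expR a) <= a <= Num.max (0 * expR 0) (a * expR a).
    rewrite mul0r; apply/andP; split.
      by rewrite ge_min; apply/orP; left; exact: ltW.
    by rewrite le_max; apply/orP; right; rewrite ler_peMr // ltW.
  have [c cin Hc] := IVT (ltW a0) cf v1.
  exists c; split => //.
  by move: cin; rewrite in_itv /= => /andP[c0 _]; apply: le_trans c0; rewrite lerN10.
have [Hw1 Hw2] := xgetPex 0 ex.
rewrite /LambertW0; split => //.
rewrite ltNge; apply/negP => W0.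
have : xget 0 [set w | -1 <= w /\ w * expR w = a] * expR (xget 0 [set w | -1 <= w /\ w * expR w = a]) <= 0.
  by rewrite mulr_le0_ge0 // expR_ge0.
rewrite Hw2; lra.
Qed.
Section Dyn.
Variables (R : realType) (d n : nat) (g : 'I_n -> 'rV[R]_d -> 'rV[R]_d) (eta : R).

Lemma order_seq_size (s : 'S_n) : size (order_seq s) = n.
Proof. by rewrite /order_seq size_map size_enum_ord. Qed.

Lemma order_seq_nth (s : 'S_n) (i : 'I_n) x0 : nth x0 (order_seq s) i = s i.
Proof.
by rewrite /order_seq (nth_map i) ?size_enum_ord ?ltn_ord // nth_ord_enum.
Qed.

Lemma pass_iterS (s : 'S_n) x0 (i : 'I_n) :
  pass_iter g eta s x0 i.+1 =
  pass_iter g eta s x0 i - eta *: g (s i) (pass_iter g eta s x0 i).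
Proof.
rewrite /pass_iter (take_nth (s i)) ?order_seq_size ?ltn_ord //.
by rewrite foldl_rcons order_seq_nth.
Qed.

Lemma index_order (s : 'S_n) (i : 'I_n) : index (s i) (order_seq s) = i.
Proof. by rewrite /order_seq index_map ?index_enum_ord //; exact: perm_inj. Qed.

Lemma epoch_grad_perm (s : 'S_n) x0 (i : 'I_n) :
  epoch_grad g eta s x0 (s i) = g (s i) (pass_iter g eta s x0 i).
Proof. by rewrite /epoch_grad index_order. Qed.

Lemma index_order_lt (s : 'S_n) (j : 'I_n) : (index j (order_seq s) < n)%N.
Proof.
have -> : j = s (s^-1 j)%g by rewrite permKV.
by rewrite index_order ltn_ord.
Qed.

Lemma sum_epoch_grad (s : 'S_n) x0 :
  \sum_(j < n) epoch_grad g eta s x0 j =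
  \sum_(i < n) g (s i) (pass_iter g eta s x0 i).
Proof.
rewrite (reindex_inj (@perm_inj _ s)) /=.
by apply: eq_bigr => i _; rewrite epoch_grad_perm.
Qed.

Lemma big_ltS (V : zmodType) (F : 'I_n -> V) (m : nat) (Hm : (m < n)%N) :
  \sum_(i < n | (i < m.+1)%N) F i = \sum_(i < n | (i < m)%N) F i + F (Ordinal Hm).
Proof.
rewrite (bigD1 (Ordinal Hm)) //= addrC; congr (_ + _).
apply: eq_bigl => i; rewrite ltnS leq_eqVlt.
case: (eqVneq i (Ordinal Hm)) => [->|ne] /=; first by rewrite eqxx ltnn.
have -> : (val i == m) = false.
  by apply/negbTE; apply: contra ne => /eqP h; apply/eqP; apply: val_inj.
by rewrite andbT.
Qed.

Lemma pass_iter_sum (s : 'S_n) x0 (m : nat) : (m <= n)%N ->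
  pass_iter g eta s x0 m =
  x0 - eta *: \sum_(i < n | (i < m)%N) g (s i) (pass_iter g eta s x0 i).
Proof.
elim: m => [_|m IH Hm].
  rewrite big_pred0 ?scaler0 ?subr0; first by rewrite /pass_iter take0.
  by move=> i; rewrite ltn0.
have Hm' : (m < n)%N by [].
rewrite (big_ltS _ Hm') (pass_iterS s x0 (Ordinal Hm')).
set X := pass_iter g eta s x0 (Ordinal Hm').
have -> : X = x0 - eta *: \sum_(i < n | (i < m)%N) g (s i) (pass_iter g eta s x0 i).
  by rewrite /X /= IH // ltnW.
by rewrite scalerDr opprD addrA.
Qed.

Lemma pass_iter_n (s : 'S_n) x0 :
  pass_iter g eta s x0 n = x0 - eta *: \sum_(j < n) epoch_grad g eta s x0 j.
Proof.
rewrite pass_iter_sum // sum_epoch_grad; congr (_ - _ *: _).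
by apply: eq_bigl => i; rewrite ltn_ord.
Qed.

End Dyn.
Lemma sum_cond_le (R : realType) n (P : pred 'I_n) (F : 'I_n -> R) (c : R) :
  (forall i, P i -> F i <= c) -> 0 <= c -> \sum_(i < n | P i) F i <= n%:R * c.
Proof.
move=> HF c0; rewrite big_mkcond /=.
apply: le_trans (_ : \sum_(i < n) c <= _).
  by apply: ler_sum => i _; case: ifP => Pi; [exact: HF|].
by rewrite sumr_const card_ord mulr_natl.
Qed.

Section Epoch.
Variables (R : realType) (d n : nat) (g : 'I_n -> 'rV[R]_d -> 'rV[R]_d) (L eta : R).
Hypothesis L0 : 0 <= L.
Hypothesis eta0 : 0 <= eta.
Hypothesis gL : forall i x y, norm2 (g i x - g i y) <= L * norm2 (x - y).
Hypothesis small : eta * n%:R * L <= 2^-1.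

Lemma epoch_bound (s : 'S_n) (y G : 'rV[R]_d) (P : R) :
  (forall m, (m <= n)%N ->
     norm2 (\sum_(i < n | (i < m)%N) (g (s i) y - G)) <= P) ->
  forall m, (m <= n)%N ->
  norm2 (pass_iter g eta s y m - y) <= 2 * eta * (n%:R * norm2 G + P).
Proof.
move=> HP; set B := 2 * eta * _.
have P0 : 0 <= P by apply: le_trans (HP 0%N isT); exact: norm2_ge0.
have G0 := norm2_ge0 G.
have n0 : 0 <= n%:R :> R by [].
have B0 : 0 <= B by rewrite /B !mulr_ge0 // addr_ge0 // mulr_ge0.
move=> m; elim/ltn_ind: m => m IH Hm.
rewrite pass_iter_sum // addrAC subrr add0r norm2N norm2Z ger0_norm //.
set S := \sum_(i < n | _) _.
have decomp : S = \sum_(i < n | (i < m)%N) (g (s i) y - G)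
   + \sum_(i < n | (i < m)%N) (g (s i) (pass_iter g eta s y i) - g (s i) y)
   + \sum_(i < n | (i < m)%N) G.
  rewrite -!big_split; apply: eq_bigr => i _.
  by rewrite /= [_ - G + _]addrC addrA subrK subrK.
have N1 := HP m Hm.
have N2 : norm2 (\sum_(i < n | (i < m)%N)
            (g (s i) (pass_iter g eta s y i) - g (s i) y)) <= n%:R * (L * B).
  apply: le_trans (norm2_sum _ _ _) _; apply: sum_cond_le; last exact: mulr_ge0.
  move=> i ltim; apply: le_trans (gL _ _ _) _; apply: ler_wpM2l => //.
  by apply: IH => //; apply: leq_trans (ltn_ord i).
have N3 : norm2 (\sum_(i < n | (i < m)%N) G) <= n%:R * norm2 G.
  apply: le_trans (norm2_sum _ _ _) _; exact: sum_cond_le.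
have NS : norm2 S <= P + n%:R * (L * B) + n%:R * norm2 G.
  rewrite decomp; apply: le_trans (norm2D _ _) _.
  apply: lerD => //; apply: le_trans (norm2D _ _) _; exact: lerD.
apply: le_trans (ler_wpM2l eta0 NS) _.
have : eta * n%:R * L * B <= 2^-1 * B by apply: ler_wpM2r.
rewrite /B; nra.
Qed.

End Epoch.
Lemma herd_prefix (R : realType) d n (herd : ('I_n -> 'rV[R]_d) -> 'S_n) (H : R)
    (c : 'I_n -> 'rV[R]_d) (M : R) :
  herding_bound herd H -> 0 <= H -> 0 <= M -> \sum_(j < n) c j = 0 ->
  (forall j, norm2 (c j) <= M) ->
  forall k, (k <= n)%N ->
  norm2 (\sum_(i < n | (i < k)%N) c (herd (rescale c) i)) <= H * M.
Proof.
move=> Hh H0 M0 csum cM k kn.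
set cm := \big[Num.max/0]_(i < n) norm2 (c i).
have cmM : cm <= M by apply: bigmax_le.
have ccm : forall i, norm2 (c i) <= cm.
  by move=> i; apply: (@le_bigmax_seq _ _ _ _ _ i) => //; exact: mem_index_enum.
have cm0 : 0 <= cm.
  by rewrite /cm; elim/big_ind: _ => // [x y hx hy|i _]; [rewrite le_max hx|exact: norm2_ge0].
have HM : 0 <= H * M by apply: mulr_ge0.
case: (eqVneq cm 0) => [cmz|cmnz].
  have cz : forall i, c i = 0.
    by move=> i; apply: norm2_eq0; apply: le_anti; rewrite norm2_ge0 andbT -cmz ccm.
  by rewrite big1 ?norm2_0 // => i _; rewrite cz.
have cmp : 0 < cm by rewrite lt_neqAle eq_sym cmnz cm0.
have hz : forall i, rescale c i = cm^-1 *: c i.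
  by move=> i; rewrite /rescale -/cm (negbTE cmnz).
case: k kn => [_|k kn].
  by rewrite big_pred0 ?norm2_0 // => i; rewrite ltn0.
have B := Hh (rescale c).
have nz : forall i, norm2 (rescale c i) <= 1.
  move=> i; rewrite hz norm2Z ger0_norm ?invr_ge0 //.
  by rewrite ler_pdivrMl // mulr1.
have sz : \sum_(i < n) rescale c i = 0.
  by under eq_bigr => i _ do rewrite hz; rewrite -scaler_sumr csum scaler0.
have := B nz sz k.+1 kn.
have -> : \sum_(i < n | (i < k.+1)%N) rescale c (herd (rescale c) i) =
          cm^-1 *: \sum_(i < n | (i < k.+1)%N) c (herd (rescale c) i).
  by rewrite scaler_sumr; apply: eq_bigr => i _; rewrite hz.
rewrite norm2Z ger0_norm ?invr_ge0 // => h.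
have : norm2 (\sum_(i < n | (i < k.+1)%N) c (herd (rescale c) i)) <= cm * H.
  by rewrite -ler_pdivrMl.
move=> h2; apply: le_trans h2 _; rewrite mulrC; exact: ler_wpM2l.
Qed.
Section Main.
Variables (R : realType) (d n : nat) (f : 'I_n -> 'rV[R]_d -> R)
  (g : 'I_n -> 'rV[R]_d -> 'rV[R]_d)
  (L mu tau nu H Fstar eta : R) (herd : ('I_n -> 'rV[R]_d) -> 'S_n)
  (s1 : 'S_n) (x01 : 'rV[R]_d).

Definition FF (x : 'rV[R]_d) := (n%:R)^-1 * \sum_(i < n) f i x.
Definition GF (x : 'rV[R]_d) := (n%:R)^-1 *: \sum_(i < n) g i x.

Hypothesis Lpos : 0 < L.
Hypothesis tau0 : 0 <= tau.
Hypothesis nu0 : 0 <= nu.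
Hypothesis Hpos : 0 < H.
Hypothesis Hn : H <= n%:R.
Hypothesis grad : forall i, is_gradient (f i) (g i).
Hypothesis lip : forall i x y, norm2 (g i x - g i y) <= L * norm2 (x - y).
Hypothesis var : forall i x, norm2 (g i x - GF x) <= tau * norm2 (GF x) + nu.

Lemma nR_gt0 : 0 < n%:R :> R.
Proof. exact: lt_le_trans Hpos Hn. Qed.

Lemma sum_le_const (F : 'I_n -> R) c :
  (forall i, F i <= c) -> \sum_(i < n) F i <= n%:R * c.
Proof.
move=> HF; apply: le_trans (_ : \sum_(i < n) c <= _).
  by apply: ler_sum => i _; exact: HF.
by rewrite sumr_const card_ord mulr_natl.
Qed.

Lemma avg_norm (v : 'I_n -> 'rV[R]_d) c :
  (forall j, norm2 (v j) <= c) -> norm2 ((n%:R)^-1 *: \sum_(j < n) v j) <= c.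
Proof.
move=> hv; have np := nR_gt0.
rewrite norm2Z ger0_norm ?invr_ge0 ?(ltW np) // ler_pdivrMl //.
apply: le_trans (norm2_sum _ _ _) _; exact: sum_le_const.
Qed.

Lemma gradF_lip x y : norm2 (GF x - GF y) <= L * norm2 (x - y).
Proof. by rewrite /GF -scalerBr -sumrB; apply: avg_norm => j; exact: lip. Qed.

Lemma descentF x y :
  FF y <= FF x + dotv (GF x) (y - x) + L * norm2 (y - x) ^+ 2.
Proof.
have np := nR_gt0.
set h := y - x.
have S : \sum_(i < n) f i y <=
         \sum_(i < n) (f i x + dotv (g i x) h + L * norm2 h ^+ 2).
  by apply: ler_sum => i _; apply: (descent1 (ltW Lpos) (grad i) (lip i)).
rewrite !big_split /= sumr_const card_ord -mulr_natl in S.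
rewrite /FF /GF dotvZl dotv_suml.
have e : (n%:R)^-1 * (n%:R * (L * norm2 h ^+ 2)) = L * norm2 h ^+ 2.
  by rewrite mulKf // gt_eqF.
rewrite -e -!mulrDr; apply: ler_wpM2l => //; exact: ltW (invr_gt0 _).
Qed.

Hypothesis eta0 : 0 <= eta.
Hypothesis hsmall : 14 * (eta * n%:R * L) * (1 + tau) <= 6^-1.
Hypothesis herdH : herding_bound herd H.

Lemma u_small : eta * n%:R * L <= 84^-1.
Proof.
have u0 : 0 <= eta * n%:R * L by rewrite !mulr_ge0 // ltW.
have := mulr_ge0 u0 tau0; have := hsmall; nra.
Qed.

Lemma small2 : eta * n%:R * L <= 2^-1.
Proof. have := u_small; lra. Qed.

Definition yy k := (GraB_state g eta herd s1 x01 k).2.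
Definition pp k := (GraB_state g eta herd s1 x01 k).1.
Definition GG k := GF (yy k).
Definition uu := eta * n%:R * L.
Definition rr := 14 * uu * (1 + tau).

Fixpoint Eh k := match k with
  | 0 => rr * norm2 (GG 0) + 2 * uu * nu
  | k'.+1 => rr * norm2 (GG k'.+1) + 2 * eta * L * H * nu + rr * Eh k'
  end.

Lemma uu_ge0 : 0 <= uu.
Proof. by rewrite /uu !mulr_ge0 // ltW. Qed.

Lemma rr_ge0 : 0 <= rr.
Proof. by apply: mulr_ge0; [apply: mulr_ge0 => //; exact: uu_ge0|apply: addr_ge0]. Qed.

Lemma Eh_ge0 k : 0 <= Eh k.
Proof.
have r0 := rr_ge0; have u0 := uu_ge0.
elim: k => [|k IH].
  by apply: addr_ge0; apply: mulr_ge0 => //; [apply: norm2_ge0|apply: mulr_ge0].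
apply: addr_ge0; last exact: mulr_ge0.
apply: addr_ge0; first by apply: mulr_ge0 => //; apply: norm2_ge0.
by rewrite !mulr_ge0 // ltW.
Qed.

Lemma yyS k : yy k.+1 = pass_iter g eta (pp k) (yy k) n.
Proof. by []. Qed.

Definition zbar k := (n%:R)^-1 *: \sum_(j < n) epoch_grad g eta (pp k) (yy k) j.
Definition cc k := fun j => epoch_grad g eta (pp k) (yy k) j - zbar k.

Lemma ppS k : pp k.+1 = herd (rescale (cc k)).
Proof. by []. Qed.

Definition claimP k := forall m, (m <= n)%N ->
  L * norm2 (pass_iter g eta (pp k) (yy k) m - yy k) <= Eh k.

Section Facts.
Variable k : nat.
Hypothesis IH : claimP k.

Lemma fact_a j : norm2 (epoch_grad g eta (pp k) (yy k) j - g j (yy k)) <= Eh k.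
Proof.
apply: le_trans (lip _ _ _) _; apply: IH.
exact: ltnW (index_order_lt _ _).
Qed.

Lemma fact_b : L * norm2 (yy k.+1 - yy k) <= Eh k.
Proof. by rewrite yyS; apply: IH. Qed.

Lemma fact_c j : norm2 (g j (yy k.+1) - epoch_grad g eta (pp k) (yy k) j) <= 2 * Eh k.
Proof.
apply: le_trans (lip _ _ _) _.
set p := pass_iter g eta (pp k) (yy k) (index j (order_seq (pp k))).
have h1 : L * norm2 (p - yy k) <= Eh k.
  by apply: IH; exact: ltnW (index_order_lt _ _).
have h2 := fact_b.
have : norm2 (yy k.+1 - p) <= norm2 (yy k.+1 - yy k) + norm2 (p - yy k).
  rewrite (norm2B p); apply: le_trans (norm2D _ _); rewrite addrA subrK.
  done.
move=> h3; have := ler_wpM2l (ltW Lpos) h3; lra.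
Qed.

Lemma fact_d : norm2 (GG k - zbar k) <= Eh k.
Proof.
rewrite /GG /GF /zbar -scalerBr -sumrB; apply: avg_norm => j.
by rewrite norm2B; exact: fact_a.
Qed.

Lemma fact_e j : norm2 (cc k j) <= tau * norm2 (GG k) + nu + 2 * Eh k.
Proof.
have -> : cc k j = (epoch_grad g eta (pp k) (yy k) j - g j (yy k))
                 + (g j (yy k) - GG k) + (GG k - zbar k).
  by rewrite /cc !addrA subrK subrK.
apply: le_trans (norm2D _ _) _; apply: le_trans (lerD (norm2D _ _) (lexx _)) _.
have := fact_a j; have := var j (yy k); have := fact_d; rewrite /GG; lra.
Qed.

Lemma fact_f : \sum_(j < n) cc k j = 0.
Proof.
rewrite /cc sumrB sumr_const card_ord /zbar -scaler_nat scalerA mulfV.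
  by rewrite scale1r subrr.
by rewrite gt_eqF // nR_gt0.
Qed.

Lemma fact_h j : norm2 (g j (yy k.+1) - GG k.+1 - cc k j) <= 4 * Eh k.
Proof.
have -> : g j (yy k.+1) - GG k.+1 - cc k j =
    (g j (yy k.+1) - epoch_grad g eta (pp k) (yy k) j) - (GG k.+1 - zbar k).
  by rewrite /cc !opprD !opprK addrACA.
apply: le_trans (norm2D _ _) _; rewrite norm2N.
have : norm2 (GG k.+1 - zbar k) <= 2 * Eh k.
  rewrite /GG /GF /zbar -scalerBr -sumrB; apply: avg_norm => i.
  exact: fact_c.
have := fact_c j; lra.
Qed.

End Facts.

Lemma claim k : claimP k.
Proof.
have u0 := uu_ge0; have r0 := rr_ge0; have np := nR_gt0.
have sm := small2.
elim: k => [|k IH].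
  have HP : forall m, (m <= n)%N ->
     norm2 (\sum_(i < n | (i < m)%N) (g (pp 0 i) (yy 0) - GG 0))
       <= n%:R * (tau * norm2 (GG 0) + nu).
    move=> m _; apply: le_trans (norm2_sum _ _ _) _; apply: sum_cond_le.
      by move=> i _; exact: var.
    by rewrite addr_ge0 // mulr_ge0 // norm2_ge0.
  move=> m Hm.
  have := epoch_bound (ltW Lpos) eta0 lip sm HP Hm.
  move=> /(ler_wpM2l (ltW Lpos)) h; apply: le_trans h _.
  rewrite /Eh /rr -/uu.
  have G0 := norm2_ge0 (GG 0).
  have e : L * (2 * eta * (n%:R * norm2 (GG 0) + n%:R * (tau * norm2 (GG 0) + nu)))
     = 2 * uu * (1 + tau) * norm2 (GG 0) + 2 * uu * nu by rewrite /uu; ring.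
  rewrite e; apply: lerD => //; apply: ler_wpM2r => //.
  apply: ler_wpM2r; [exact: addr_ge0|]; lra.
set E := Eh k.
have E0 : 0 <= E := Eh_ge0 k.
have HP : forall m, (m <= n)%N ->
   norm2 (\sum_(i < n | (i < m)%N) (g (pp k.+1 i) (yy k.+1) - GG k.+1))
     <= H * (tau * norm2 (GG k) + nu + 2 * E) + n%:R * (4 * E).
  move=> m Hm.
  have -> : \sum_(i < n | (i < m)%N) (g (pp k.+1 i) (yy k.+1) - GG k.+1) =
     \sum_(i < n | (i < m)%N) cc k (pp k.+1 i) +
     \sum_(i < n | (i < m)%N) (g (pp k.+1 i) (yy k.+1) - GG k.+1 - cc k (pp k.+1 i)).
    by rewrite -big_split /=; apply: eq_bigr => i _; rewrite addrC subrK.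
  apply: le_trans (norm2D _ _) _; apply: lerD.
    rewrite ppS; apply: herd_prefix => //; first exact: ltW.
      by rewrite !addr_ge0 ?mulr_ge0 ?norm2_ge0.
      exact: fact_f.
    exact: fact_e.
  apply: le_trans (norm2_sum _ _ _) _; apply: sum_cond_le; last by rewrite mulr_ge0.
  by move=> i _; exact: fact_h.
move=> m Hm.
have := epoch_bound (ltW Lpos) eta0 lip sm HP Hm.
move=> /(ler_wpM2l (ltW Lpos)) h; apply: le_trans h _.
have hG : norm2 (GG k) <= norm2 (GG k.+1) + E.
  have h1 : norm2 (GG k - GG k.+1) <= E.
    apply: le_trans (gradF_lip _ _) _; rewrite norm2B; exact: fact_b.
  have := norm2D (GG k.+1) (GG k - GG k.+1); rewrite addrC subrK; lra.
have w0 : 0 <= eta * L * H by rewrite !mulr_ge0 // ltW.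
have wu : eta * L * H <= uu.
  by rewrite /uu [eta * n%:R * L]mulrAC; apply: ler_wpM2l => //; rewrite mulr_ge0 // ltW.
have Gk0 := norm2_ge0 (GG k); have Gk1 := norm2_ge0 (GG k.+1).
rewrite [Eh k.+1]/= -/E /rr.
have e : L * (2 * eta * (n%:R * norm2 (GG k.+1) +
     (H * (tau * norm2 (GG k) + nu + 2 * E) + n%:R * (4 * E)))) =
   2 * uu * norm2 (GG k.+1) + 2 * (eta * L * H) * tau * norm2 (GG k)
   + 2 * eta * L * H * nu + 4 * (eta * L * H) * E + 8 * uu * E by rewrite /uu; ring.
rewrite e.
have t1 : (eta * L * H) * (tau * norm2 (GG k)) <= uu * (tau * (norm2 (GG k.+1) + E)).
  apply: ler_pM => //; first exact: mulr_ge0.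
  by apply: ler_wpM2l.
have t2 : (eta * L * H) * E <= uu * E by apply: ler_wpM2r.
have t3 : 0 <= uu * tau * E by apply: mulr_ge0 => //; apply: mulr_ge0.
have t4 : 0 <= uu * tau * norm2 (GG k.+1) by apply: mulr_ge0 => //; apply: mulr_ge0.
nra.
Qed.

Lemma descent_epoch k :
  FF (yy k.+1) <= FF (yy k) - (eta * n%:R / 2) * norm2 (GG k) ^+ 2
                 + (eta * n%:R / 2) * Eh k ^+ 2.
Proof.
have np := nR_gt0; have IH := claim k.
set s := eta * n%:R.
have s0 : 0 <= s by rewrite mulr_ge0 // ltW.
have sL : L * s <= 2^-1 by have := small2; rewrite /s; lra.
set G := GG k.
set v := zbar k.
set e := v - G.
have he : norm2 e <= Eh k by rewrite /e norm2B; exact: fact_d.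
have dy : yy k.+1 - yy k = - (s *: v).
  rewrite yyS pass_iter_n -/(yy k) addrAC subrr add0r /v /zbar scalerA.
  by rewrite /s -mulrA mulfV ?mulr1 // gt_eqF.
have D := descentF (yy k) (yy k.+1).
rewrite dy -/(GG k) -/G norm2N norm2Z ger0_norm // dotvNr dotvZr in D.
have hv : v = G + e by rewrite /e addrC subrK.
clearbody e.
rewrite hv dotvDr -norm2_sq exprMn in D.
have X0 : 0 <= norm2 (G + e) ^+ 2 by apply: exprn_ge0; apply: norm2_ge0.
have Xe : norm2 (G + e) ^+ 2 = norm2 G ^+ 2 + 2 * dotv G e + norm2 e ^+ 2.
  by rewrite !norm2_sq dotvDl !dotvDr (dotvC e G); ring.
have he2 : norm2 e ^+ 2 <= Eh k ^+ 2.
  by rewrite lerXn2r ?nnegrE ?norm2_ge0 // (le_trans (norm2_ge0 e) he).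
have T : L * (s ^+ 2 * norm2 (G + e) ^+ 2) <= s / 2 * norm2 (G + e) ^+ 2.
  have : L * s * (s * norm2 (G + e) ^+ 2) <= 2^-1 * (s * norm2 (G + e) ^+ 2).
    by apply: ler_wpM2r => //; rewrite mulr_ge0.
  move=> h; nra.
rewrite Xe in T D.
have s2 : 0 <= s / 2 by rewrite divr_ge0.
have := ler_wpM2l s2 he2.
nra.
Qed.

Hypothesis mupos : 0 < mu.
Hypothesis mu2L : mu <= 2 * L.
Hypothesis PL : forall x, mu * (FF x - Fstar) <= 2^-1 * norm2 (GF x) ^+ 2.

Definition Dl k := FF (yy k) - Fstar.
Definition ss := eta * n%:R.
Definition Psi k := Dl k.+1 + ss * Eh k ^+ 2.
Definition AA := 2 * eta * L * H * nu.
Definition rho := 1 - 3 / 4 * ss * mu.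

Lemma rr_small : rr <= 6^-1.
Proof. exact: hsmall. Qed.

Lemma ss_ge0 : 0 <= ss.
Proof. by rewrite /ss mulr_ge0 // ltW // nR_gt0. Qed.

Lemma ssmu : ss * mu <= 42^-1.
Proof.
have := u_small; have := ss_ge0; rewrite /ss => s0 u.
have : ss * mu <= ss * (2 * L) by apply: ler_wpM2l.
rewrite /ss; nra.
Qed.

Lemma psi0 : Psi 0 <= Dl 0 + nu ^+ 2 / L.
Proof.
have D := descent_epoch 0.
have r0 := rr_ge0; have rs := rr_small; have s0 := ss_ge0; have u0 := uu_ge0.
have us : uu <= 84^-1 := u_small.
have G0 := norm2_ge0 (GG 0).
rewrite /Psi /Dl.
have E0 : Eh 0 = rr * norm2 (GG 0) + 2 * uu * nu by [].
have EE : Eh 0 ^+ 2 <= 2 * (rr ^+ 2 * norm2 (GG 0) ^+ 2) + 2 * (2 * uu * nu) ^+ 2.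
  rewrite E0; have := sqr_ge0 (rr * norm2 (GG 0) - 2 * uu * nu); nra.
have T1 : ss * (rr ^+ 2 * norm2 (GG 0) ^+ 2) <= ss / 36 * norm2 (GG 0) ^+ 2.
  have h : rr ^+ 2 <= 36^-1 by rewrite expr2; nra.
  have h' := ler_wpM2r (exprn_ge0 2 G0) h.
  have := ler_wpM2l s0 h'; lra.
have T2 : 12 * ss * (uu ^+ 2 * nu ^+ 2) <= nu ^+ 2 / L.
  have u3 : uu ^+ 3 <= 12^-1.
    have h2 : uu ^+ 2 <= 1 by rewrite expr2; nra.
    rewrite exprS; have := ler_wpM2l u0 h2; lra.
  have e : 12 * ss * (uu ^+ 2 * nu ^+ 2) * L = 12 * uu ^+ 3 * nu ^+ 2.
    by rewrite /ss /uu; ring.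
  rewrite ler_pdivlMr // e.
  have := sqr_ge0 nu; nra.
have : ss / 2 * Eh 0 ^+ 2 + ss * Eh 0 ^+ 2 <= 3 / 2 * ss * Eh 0 ^+ 2 by lra.
have := ler_wpM2l s0 EE.
rewrite /ss in T1 T2 * => h1 h2.
set X := eta * n%:R in D h1 h2 T1 T2 *.
have : 0 <= X * norm2 (GG 0) ^+ 2 by apply: mulr_ge0 => //; exact: exprn_ge0.
lra.
Qed.

Lemma sq3 (a b c : R) : (a + b + c) ^+ 2 <= 3 * a ^+ 2 + 3 * b ^+ 2 + 3 * c ^+ 2.
Proof.
have := sqr_ge0 (a - b); have := sqr_ge0 (b - c); have := sqr_ge0 (a - c); nra.
Qed.

Lemma psiS k : Psi k.+1 <= rho * Psi k + 9 / 2 * ss * AA ^+ 2.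
Proof.
have D := descent_epoch k.+1.
have r0 := rr_ge0; have rs := rr_small; have s0 := ss_ge0.
have G0 := norm2_ge0 (GG k.+1).
have Ek0 := Eh_ge0 k.
have E1 : Eh k.+1 = rr * norm2 (GG k.+1) + AA + rr * Eh k by [].
have EE : Eh k.+1 ^+ 2 <=
    3 * (rr ^+ 2 * norm2 (GG k.+1) ^+ 2) + 3 * AA ^+ 2 + 3 * (rr ^+ 2 * Eh k ^+ 2).
  rewrite E1; have := sq3 (rr * norm2 (GG k.+1)) AA (rr * Eh k).
  by rewrite !exprMn.
have r2 : rr ^+ 2 <= 36^-1 by rewrite expr2; nra.
have T1 : ss * (rr ^+ 2 * norm2 (GG k.+1) ^+ 2) <= ss / 36 * norm2 (GG k.+1) ^+ 2.
  have h' := ler_wpM2r (exprn_ge0 2 G0) r2.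
  have := ler_wpM2l s0 h'; lra.
have T2 : ss * (rr ^+ 2 * Eh k ^+ 2) <= ss / 36 * Eh k ^+ 2.
  have h' := ler_wpM2r (exprn_ge0 2 Ek0) r2.
  have := ler_wpM2l s0 h'; lra.
have h1 := ler_wpM2l s0 EE.
have P := PL (yy k.+1).
rewrite -/(GG k.+1) in P.
have P' : ss * mu * (FF (yy k.+1) - Fstar) <= ss / 2 * norm2 (GG k.+1) ^+ 2.
  have := ler_wpM2l s0 P; rewrite !mulrA; lra.
have sm := ssmu.
have q0 : 0 <= ss * Eh k ^+ 2 by apply: mulr_ge0 => //; exact: exprn_ge0.
have q1 : 0 <= ss * mu * (ss * Eh k ^+ 2) by rewrite mulr_ge0 // mulr_ge0 // ltW.
have q2 : ss * mu * (ss * Eh k ^+ 2) <= 42^-1 * (ss * Eh k ^+ 2) by apply: ler_wpM2r.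
rewrite /Psi /Dl /rho.
rewrite /ss in D h1 T1 T2 P' q0 q1 q2 *.
set X := eta * n%:R in D h1 T1 T2 P' q0 q1 q2 *.
have : 0 <= X * norm2 (GG k.+1) ^+ 2 by apply: mulr_ge0 => //; exact: exprn_ge0.
nra.
Qed.

Lemma rho_ge0 : 0 <= rho.
Proof. have := ssmu; have := ss_ge0; rewrite /rho; nra. Qed.

Lemma psi_all k : Psi k <= rho ^+ k * Psi 0 + 6 * AA ^+ 2 / mu.
Proof.
elim: k => [|k IH]; first by rewrite expr0 mul1r lerDl divr_ge0 // ?mulr_ge0 ?sqr_ge0 // ltW.
apply: le_trans (psiS k) _.
have h := ler_wpM2l rho_ge0 IH.
have e : rho * (6 * AA ^+ 2 / mu) + 9 / 2 * ss * AA ^+ 2 = 6 * AA ^+ 2 / mu.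
  by rewrite /rho; field; rewrite gt_eqF.
have h2 : rho * (rho ^+ k * Psi 0 + 6 * AA ^+ 2 / mu) + 9 / 2 * ss * AA ^+ 2
        = rho ^+ k.+1 * Psi 0 + 6 * AA ^+ 2 / mu.
  by rewrite mulrDr -addrA e [rho ^+ k.+1]exprS mulrA.
by apply: le_trans (lerD h (lexx _)) _; rewrite h2.
Qed.

Lemma final_bound K : Dl K.+1 <= rho ^+ K * (Dl 0 + nu ^+ 2 / L) + 6 * AA ^+ 2 / mu.
Proof.
have Ek := exprn_ge0 2 (Eh_ge0 K).
have h1 : Dl K.+1 <= Psi K.
  by rewrite /Psi lerDl mulr_ge0 // ss_ge0.
apply: le_trans h1 _; apply: le_trans (psi_all K) _.
rewrite lerD2r; apply: ler_wpM2l; [exact: exprn_ge0 rho_ge0|exact: psi0].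
Qed.
End Main.

Lemma pow_le (R : realType) (x S : R) k : 0 <= x -> x <= S -> x ^+ k <= S ^+ k.
Proof. by move=> x0 xS; apply: lerXn2r => //; rewrite nnegrE // (le_trans x0 xS). Qed.

Ltac pos := repeat first [ assumption | apply: mulr_ge0 | apply: exprn_ge0
  | apply: addr_ge0 | apply: ltW ].

Lemma lam_bounds (R : realType) (n K : nat) (L mu tau nu H D0 : R) :
  0 < L -> 0 < mu -> 0 <= tau -> 0 < nu -> 0 < H -> (1 <= n)%N -> (1 <= K)%N ->
  0 <= D0 ->
  1 <= ln (expR 1 + n%:R + K%:R + L + L^-1 + mu + mu^-1 + tau + nu + nu^-1
                 + H + H^-1 + D0) /\
  LambertW0 ((D0 + nu ^+ 2 / L) * mu ^+ 3 * n%:R ^+ 2 * K%:R ^+ 2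
           / (192 * H ^+ 2 * L ^+ 2 * nu ^+ 2)) <=
  17 * ln (expR 1 + n%:R + K%:R + L + L^-1 + mu + mu^-1 + tau + nu + nu^-1
                 + H + H^-1 + D0).
Proof.
move=> Lp mup tau0 nup Hp n1 K1 D00.
set S := expR 1 + _ + _ + _ + _ + _ + _ + _ + _ + _ + _ + _ + _.
set a := _ / _.
have e2 : 2 <= expR 1 :> R by have := expR_ge1Dx (1 : R); lra.
have n1' : 1 <= n%:R :> R by rewrite ler1n.
have K1' : 1 <= K%:R :> R by rewrite ler1n.
have Li : 0 < L^-1 by rewrite invr_gt0.
have mui : 0 < mu^-1 by rewrite invr_gt0.
have nui : 0 < nu^-1 by rewrite invr_gt0.
have Hi : 0 < H^-1 by rewrite invr_gt0.
have eS : expR 1 <= S by rewrite /S; lra.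
have S3 : 3 <= S by rewrite /S; lra.
have S0 : 0 < S by lra.
have lnS : 1 <= ln S.
  by rewrite -[X in X <= _](expRK 1) ler_ln // posrE expR_gt0.
split => //.
have ap : 0 < a.
  have np : 0 < n%:R :> R by lra.
  have Kp : 0 < K%:R :> R by lra.
  have p1 : 0 < D0 + nu ^+ 2 / L.
    by apply: ltr_pwDr => //; rewrite divr_gt0 // exprn_gt0.
  apply: divr_gt0.
    apply: mulr_gt0; last exact: exprn_gt0.
    apply: mulr_gt0; last exact: exprn_gt0.
    by apply: mulr_gt0; last exact: exprn_gt0.
  apply: mulr_gt0; last exact: exprn_gt0.
  apply: mulr_gt0; last exact: exprn_gt0.
  by apply: mulr_gt0; last exact: exprn_gt0.
have [W0 Wa] := lambert_spec ap.
set W := LambertW0 a in W0 Wa *.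
have Sx : forall x, 0 <= x -> x <= S -> forall k, x ^+ k <= S ^+ k.
  by move=> x x0 xS k; apply: pow_le.
have S1 : 1 <= S by lra.
have aeq : a = (D0 + nu ^+ 2 * L^-1) * mu ^+ 3 * n%:R ^+ 2 * K%:R ^+ 2
              * (192^-1 * H^-1 ^+ 2 * L^-1 ^+ 2 * nu^-1 ^+ 2).
  rewrite /a; field.
  by rewrite !gt_eqF.
have le1 : forall x : R, 0 < x -> x <= S -> forall k, x ^+ k <= S ^+ k.
  by move=> x x0 xS k; apply: Sx => //; exact: ltW.
have nu2 : 0 <= nu ^+ 2 by rewrite exprn_ge0 // ltW.
have P0 : 0 <= D0 + nu ^+ 2 * L^-1 by rewrite addr_ge0 // mulr_ge0 // ltW.
have P1 : D0 + nu ^+ 2 * L^-1 <= 2 * S ^+ 3.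
  have h1 : nu ^+ 2 * L^-1 <= S ^+ 2 * S.
    apply: ler_pM => //; first exact: ltW.
      by apply: le1 => //; rewrite /S; lra.
    by rewrite /S; lra.
  have h2 : D0 <= S ^+ 3.
    apply: le_trans (_ : S <= S ^+ 3); first by rewrite /S; lra.
    by rewrite !exprS expr0 mulr1; nra.
  by rewrite -exprSr in h1; lra.
have i0 : forall x : R, 0 < x -> 0 <= x ^+ 2 by move=> x x0; rewrite exprn_ge0 // ltW.
have c192 : 0 <= 192^-1 :> R by rewrite invr_ge0.
have Q0 : 0 <= 192^-1 * H^-1 ^+ 2 * L^-1 ^+ 2 * nu^-1 ^+ 2 by pos.
have Q : 192^-1 * H^-1 ^+ 2 * L^-1 ^+ 2 * nu^-1 ^+ 2 <= S ^+ 6.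
  have -> : S ^+ 6 = 1 * S ^+ 2 * S ^+ 2 * S ^+ 2 by ring.
  apply: ler_pM; [by pos|by pos| |by apply: le1 => //; rewrite /S; lra].
  apply: ler_pM; [by pos|by pos| |by apply: le1 => //; rewrite /S; lra].
  apply: ler_pM; [by []|by pos| |by apply: le1 => //; rewrite /S; lra].
  by rewrite invf_le1 ?ltr0n // ler1n.
have np : 0 < n%:R :> R by lra.
have Kp : 0 < K%:R :> R by lra.
have aS : a <= 2 * S ^+ 16.
  have -> : 2 * S ^+ 16 = 2 * S ^+ 3 * S ^+ 3 * S ^+ 2 * S ^+ 2 * S ^+ 6.
    by ring.
  rewrite aeq; apply: ler_pM => //; first by pos.
  apply: ler_pM; [by pos|by pos| |].
    apply: ler_pM; [by pos|by pos| |].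
      apply: ler_pM; [by []|by pos|by []|].
      by apply: le1 => //; rewrite /S; lra.
    by apply: le1 => //; rewrite /S; lra.
  by apply: le1 => //; rewrite /S; lra.
have S16 : 1 <= S ^+ 16 by rewrite exprn_ege1.
have eaS : expR 1 + a <= S ^+ 17.
  have : 3 * S ^+ 16 <= S * S ^+ 16 by apply: ler_wpM2r => //; lra.
  have : S <= S ^+ 16 by apply: ler_eXnr.
  rewrite -exprS; lra.
have eap : 0 < expR 1 + a by rewrite addr_gt0 // expR_gt0.
have lnea : ln (expR 1 + a) <= 17 * ln S.
  rewrite mulr_natl -lnXn // ler_ln //.
  by rewrite posrE exprn_gt0.
apply: le_trans lnea.
have [W1|W1] := lerP W 1.
  apply: (le_trans W1); rewrite -[X in X <= _](expRK 1) ler_ln ?posrE ?expR_gt0 //.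
  by rewrite lerDl ltW.
have : expR W < expR 1 + a.
  rewrite -Wa; apply: lt_le_trans (_ : W * expR W <= _); last by rewrite lerDr ltW // expR_gt0.
  by rewrite ltr_pMl // expR_gt0.
by move=> h; rewrite -[X in X <= _]expRK ler_ln ?posrE ?expR_gt0 // ltW.
Qed.
Lemma fin_arith (R : realType) (W Lam : R) :
  0 < W -> W <= 17 * Lam -> 1 <= Lam -> 192 * W + 96 * W ^+ 2 <= 200 * 200 * Lam ^+ 2.
Proof.
move=> W0 WL L1.
have : W ^+ 2 <= (17 * Lam) ^+ 2.
  by apply: lerXn2r; rewrite ?nnegrE ?(ltW W0) //; lra.
rewrite !expr2; nra.
Qed.

Theorem proposition10 :
  exists C1 C2 p : nat,
  forall (R : realType) (d n : nat)
    (f : 'I_n -> 'rV[R]_d -> R) (g : 'I_n -> 'rV[R]_d -> 'rV[R]_d)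
    (L mu tau nu H Fstar : R)
    (herd : ('I_n -> 'rV[R]_d) -> 'S_n)
    (s1 : 'S_n) (x01 : 'rV[R]_d) (K : nat),
  let F := fun x => (n%:R)^-1 * \sum_(i < n) f i x in
  let gradF := fun x => (n%:R)^-1 *: \sum_(i < n) g i x in
  0 < L -> 0 < mu -> 0 <= tau -> 0 < nu -> 0 < H ->
  (forall i, is_gradient (f i) (g i)) ->
  (forall i x y, norm2 (g i x - g i y) <= L * norm2 (x - y)) ->
  (forall x, Fstar <= F x) ->
  (forall e, 0 < e -> exists x, F x < Fstar + e) ->
  (forall x, 2^-1 * norm2 (gradF x) ^+ 2 >= mu * (F x - Fstar)) ->
  (forall i x, norm2 (g i x - gradF x) <= tau * norm2 (gradF x) + nu) ->
  herding_bound herd H ->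
  H <= n%:R ->
  (0 < K)%N ->
  let a := (F x01 - Fstar + nu ^+ 2 / L) * mu ^+ 3 * n%:R ^+ 2 * K%:R ^+ 2
           / (192 * H ^+ 2 * L ^+ 2 * nu ^+ 2) in
  let eta := 2 / (mu * n%:R * K%:R) * LambertW0 a in
  let Lam := ln (expR 1 + n%:R + K%:R + L + L^-1 + mu + mu^-1 + tau + nu + nu^-1
                 + H + H^-1 + (F x01 - Fstar)) in
  K%:R >= C1%:R * (L / mu) * (tau + 1) * Lam ->
  F (GraB_state g eta herd s1 x01 K).2 - Fstar
    <= C2%:R * Lam ^+ p * (H ^+ 2 * L ^+ 2 * nu ^+ 2)
         / (mu ^+ 3 * n%:R ^+ 2 * K%:R ^+ 2).
Proof.
exists (60 * 50)%N, (200 * 200)%N, 2%N.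
move=> R d n f g L mu tau nu H Fstar herd s1 x01 K F gradF Lp mup tau0 nup Hp
  grad lip Flb Finf PL var herdH Hn K0 a eta Lam.
rewrite !natrM => HK.
have n1 : (1 <= n)%N.
  by case: n f g herd s1 F gradF var Hn {a eta Lam HK PL Flb Finf lip grad herdH} => // *; lra.
have np : 0 < n%:R :> R by rewrite ltr0n.
have Kp : 0 < K%:R :> R by rewrite ltr0n.
have D00 : 0 <= F x01 - Fstar by rewrite subr_ge0.
have [lam1 Wle] := lam_bounds (n:=n) (K:=K) Lp mup tau0 nup Hp n1 K0 D00.
rewrite -/Lam in lam1 Wle.
set T := H ^+ 2 * L ^+ 2 * nu ^+ 2 / (mu ^+ 3 * n%:R ^+ 2 * K%:R ^+ 2).
have T0 : 0 < T.
  by rewrite /T divr_gt0 // !mulr_gt0 // exprn_gt0.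
have RHSe : 200%:R * 200%:R * Lam ^+ 2 * (H ^+ 2 * L ^+ 2 * nu ^+ 2)
         / (mu ^+ 3 * n%:R ^+ 2 * K%:R ^+ 2) = 200 * 200 * Lam ^+ 2 * T.
  by rewrite /T !mulrA.
rewrite RHSe.
have RHS0 : 0 <= 200 * 200 * Lam ^+ 2 * T.
  apply: mulr_ge0; last exact: ltW.
  by apply: mulr_ge0 => //; apply: exprn_ge0; lra.
have [mu2L|mu2L] := lerP mu (2 * L); last first.
  (* degenerate case: F is constant equal to Fstar *)
  apply: le_trans RHS0.
  set x := (GraB_state g eta herd s1 x01 K).2.
  set G := gradF x.
  set y := x - (2 * L)^-1 *: G.
  have D : F y <= F x + dotv G (y - x) + L * norm2 (y - x) ^+ 2 :=
    descentF Lp Hp Hn grad lip x y.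
  have hy : x - (2 * L)^-1 *: G - x = - ((2 * L)^-1 *: G).
    by rewrite addrAC subrr add0r.
  rewrite hy dotvNr dotvZr norm2N norm2Z in D.
  have Fy := Flb y.
  have P := PL x.
  rewrite -/G in P.
  have c0 : 0 < (2 * L)^-1 by rewrite invr_gt0 mulr_gt0.
  rewrite (ger0_norm (ltW c0)) -norm2_sq in D.
  have ce : L * ((2 * L)^-1 * norm2 G) ^+ 2 = (2 * L)^-1 / 2 * norm2 G ^+ 2.
    by rewrite exprMn; field; rewrite gt_eqF.
  rewrite ce in D.
  have : norm2 G ^+ 2 / (4 * L) <= F x - Fstar.
    have -> : norm2 G ^+ 2 / (4 * L) = (2 * L)^-1 / 2 * norm2 G ^+ 2.
      by field; rewrite gt_eqF.
    lra.
  move=> h.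
  have h2 : norm2 G ^+ 2 <= 4 * L * (F x - Fstar).
    by rewrite -ler_pdivrMl ?mulr_gt0 // mulrC.
  have Dx : 0 <= F x - Fstar by rewrite subr_ge0.
  nra.
have ap : 0 < a.
  rewrite /a divr_gt0 //; last by rewrite !mulr_gt0 // exprn_gt0.
  rewrite !mulr_gt0 // ?exprn_gt0 //.
  by apply: ltr_pwDr => //; rewrite divr_gt0 // exprn_gt0.
have [W0 Wa] := lambert_spec ap.
set W := LambertW0 a in W0 Wa Wle.
have etae : eta = 2 / (mu * n%:R * K%:R) * W by [].
have eta0 : 0 <= eta.
  rewrite etae; apply: mulr_ge0; last exact: ltW.
  by apply: divr_ge0 => //; apply: ltW; rewrite !mulr_gt0.
have Lam0 : 0 <= Lam by lra.
have HK' : 2856 * L * (tau + 1) * Lam <= mu * K%:R.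
  have h : 60 * 50 * (L / mu) * (tau + 1) * Lam * mu = 3000 * L * (tau + 1) * Lam.
    by field; rewrite gt_eqF.
  have := ler_wpM2r (ltW mup) HK; rewrite h mulrC => h2.
  have : 0 <= L * (tau + 1) * Lam by rewrite !mulr_ge0 // ?ltW //; lra.
  lra.
have Kbig : 84 * W <= K%:R.
  have h1 : mu * K%:R <= 2 * L * K%:R by apply: ler_wpM2r => //; exact: ltW.
  have h2 : 0 <= L * Lam * tau by apply: mulr_ge0 => //; apply: mulr_ge0 => //; exact: ltW.
  have h : L * (1428 * Lam) <= L * K%:R by lra.
  rewrite ler_pM2l // in h; lra.
have hsmall : 14 * (eta * n%:R * L) * (1 + tau) <= 6^-1.
  have e1 : 14 * (eta * n%:R * L) * (1 + tau) = 168 * W * L * (1 + tau) / (mu * K%:R) / 6.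
    by rewrite etae; field; rewrite !gt_eqF.
  have q : 168 * W * L * (1 + tau) / (mu * K%:R) <= 1.
    rewrite ler_pdivrMr ?mulr_gt0 // mul1r.
    have h2 : 0 <= L * (1 + tau) by apply: mulr_ge0; [exact: ltW|lra].
    have : W * (L * (1 + tau)) <= (17 * Lam) * (L * (1 + tau)) by apply: ler_wpM2r.
    nra.
  rewrite e1; lra.
have PL' : forall x, mu * (FF f x - Fstar) <= 2^-1 * norm2 (GF g x) ^+ 2 := PL.
have fb := final_bound s1 x01 Lp tau0 (ltW nup) Hp Hn grad lip var eta0 hsmall herdH mup mu2L PL' K.-1.
have KS : K = K.-1.+1 by rewrite prednK.
set K' := K.-1 in KS fb.
have LHSe : F (GraB_state g eta herd s1 x01 K).2 - Fstar = Dl f g Fstar eta herd s1 x01 K'.+1.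
  by rewrite -KS.
rewrite LHSe; apply: le_trans fb _.
have D0e : Dl f g Fstar eta herd s1 x01 0 = F x01 - Fstar by [].
rewrite D0e.
have Kb2 : 1428 * Lam <= K%:R.
  have h1 : mu * K%:R <= 2 * L * K%:R by apply: ler_wpM2r => //; exact: ltW.
  have h2 : 0 <= L * Lam * tau by apply: mulr_ge0 => //; apply: mulr_ge0 => //; exact: ltW.
  have h : L * (1428 * Lam) <= L * K%:R by lra.
  by rewrite ler_pM2l // in h.
have K'3 : 2 <= K'%:R :> R.
  have : K%:R = K'%:R + 1 :> R by rewrite KS -addn1 natrD.
  lra.
set x := 3 * W / (2 * K%:R).
have rhoe : rho n mu eta = 1 + - x.
  by rewrite /rho /ss etae /x; field; rewrite !gt_eqF.
have x1 : x <= 1.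
  by rewrite /x ler_pdivrMr ?mulr_gt0 // mul1r; lra.
have rho0 : 0 <= rho n mu eta by rewrite rhoe; lra.
have rhole : rho n mu eta <= expR (- x) by rewrite rhoe; exact: expR_ge1Dx.
have pw : rho n mu eta ^+ K' <= expR (- x) ^+ K'.
  by apply: lerXn2r => //; rewrite nnegrE // expR_ge0.
rewrite -expRM_natl in pw.
have xW : K'%:R * - x <= - W.
  have e : K'%:R * - x + W = - W * (K'%:R - 2) / (2 * K%:R).
    rewrite /x KS -addn1 natrD; field.
    by rewrite gt_eqF //; lra.
  have : - W * (K'%:R - 2) / (2 * K%:R) <= 0.
    apply: mulr_le0_ge0; first nra.
    by rewrite invr_ge0; apply: mulr_ge0 => //; exact: ltW.
  lra.
have eW : expR (- W) = W / a.
  by rewrite expRN -Wa; field; rewrite !gt_eqF // expR_gt0.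
have pw2 : rho n mu eta ^+ K' <= W / a.
  by apply: le_trans pw _; rewrite -eW ler_expR.
have A0 : 0 <= F x01 - Fstar + nu ^+ 2 / L.
  apply: addr_ge0 => //; apply: divr_ge0; [apply: exprn_ge0|]; exact: ltW.
have t1 := ler_wpM2r A0 pw2.
have t1e : W / a * (F x01 - Fstar + nu ^+ 2 / L) = 192 * W * T.
  rewrite /a /T; field.
  rewrite !gt_eqF //.
  have := mulr_ge0 D00 (ltW Lp); have := exprn_gt0 2 nup; lra.
have t2e : 6 * AA L nu H eta ^+ 2 / mu = 96 * W ^+ 2 * T.
  by rewrite /AA etae /T; field; rewrite !gt_eqF.
rewrite t1e in t1; rewrite t2e.
have fin := fin_arith W0 Wle lam1.
apply: le_trans (lerD t1 (lexx _)) _.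
have e3 : 192 * W * T + 96 * W ^+ 2 * T = (192 * W + 96 * W ^+ 2) * T by ring.
rewrite e3; apply: ler_wpM2r => //; exact: ltW.
Qed.
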